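(* Let $K$ be a compact line and let $G:K\to\mathbb{R}$ be a regulated function. Then $G$ is the uniform limit of step functions. In particular, $G$ is Borel measurable.
   Context: A compact line is a compact space $K$ whose topology is the order topology of a linear order on $K$; $0_K$ and $1_K$ denote its minimum and maximum, and $0_K<1_K$. A point $x\in(0_K,1_K]$ is left-dense if it has no immediate predecessor; $x\in[0_K,1_K)$ is right-dense if it has no immediate successor. $G:K\to\mathbb{R}$ is regulated if for every left-dense $x$ the limit $\lim_{y\nearrow x}G(y)$ exists, and for every right-dense $x$, $\lim_{y\searrow x}G(y)=G(x)$. A function $S:K\to\mathbb{R}$ is a step function if there are points $0_K=s_0<s_1<\cdots<s_n=1_K$ such that $S$ is constant on each open interval $(s_{k-1},s_k)$, $k=1,\dots,n$. *)

(* Defs.v *)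
From HB Require Import structures.
From mathcomp Require Import all_boot all_order all_algebra.
From mathcomp Require Import all_classical all_reals all_analysis.
Set Implicit Arguments. Unset Strict Implicit. Unset Printing Implicit Defensive.
Import Order.TTheory GRing.Theory Num.Theory numFieldNormedType.Exports.
Local Open Scope classical_set_scope.
Local Open Scope ring_scope.

Definition compact_line {d} (K : orderTopologicalType d) : Prop :=
  compact [set: K] /\ exists x y : K, (x < y)%O.

Definition imm_pred {d} {K : orderTopologicalType d} (y x : K) : Prop :=
  (y < x)%O /\ ~ (exists z : K, (y < z)%O /\ (z < x)%O).

Definition left_dense {d} {K : orderTopologicalType d} (x : K) : Prop :=
  (exists y : K, (y < x)%O) /\ ~ (exists y : K, imm_pred y x).

Definition right_dense {d} {K : orderTopologicalType d} (x : K) : Prop :=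
  (exists y : K, (x < y)%O) /\ ~ (exists y : K, imm_pred x y).

Definition regulated {d} {K : orderTopologicalType d} {R : realType}
  (G : K -> R) : Prop :=
  (forall x : K, left_dense x ->
     exists l : R, G @ within [set y | (y < x)%O] (nbhs x) --> l) /\
  (forall x : K, right_dense x ->
     G @ within [set y | (x < y)%O] (nbhs x) --> G x).

(* Step function: points 0_K = a = s_0 < s_1 < ... < s_n = 1_K (the list
   a :: s), with S constant on each open interval (s_{k-1}, s_k). *)
Definition step_fun {d} {K : orderTopologicalType d} {R : realType}
  (S : K -> R) : Prop :=
  exists (a : K) (s : seq K),
    sorted (fun u v => (u < v)%O) (a :: s) /\
    (forall x : K, (a <= x)%O) /\
    (forall x : K, (x <= last a s)%O) /\
    forall k : nat, (k < size s)%N ->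
      exists c : R, forall x : K,
        (nth a (a :: s) k < x)%O -> (x < nth a (a :: s) k.+1)%O -> S x = c.

Definition borel_set {d} {K : orderTopologicalType d} (A : set K) : Prop :=
  <<s [set U : set K | open U] >> A.

Definition borel_measurable {d} {K : orderTopologicalType d} {R : realType}
  (G : K -> R) : Prop :=
  forall B : set R, measurable B -> borel_set (G @^-1` B).

(* Main.v *)
Require Import Defs.
From HB Require Import structures.
From mathcomp Require Import all_boot all_order all_algebra.
From mathcomp Require Import all_classical all_reals all_analysis.
Import Order.TTheory GRing.Theory Num.Theory numFieldNormedType.Exports.
Local Open Scope classical_set_scope.
Local Open Scope ring_scope.

Definition KP {d} {K : orderTopologicalType d} (x : K) : Type := K.
HB.instance Definition _ {d} (K : orderTopologicalType d) (x : K) := Choice.on (KP x).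
HB.instance Definition _ {d} (K : orderTopologicalType d) (x : K) := isPointed.Build (KP x) x.
HB.instance Definition _ {d} (K : orderTopologicalType d) (x : K) := Topological.on (KP x).
Definition KB {d} {K : orderTopologicalType d} (x : K) :=
  g_sigma_algebraType (T := KP x) [set U : set K | open U].

Lemma sorted_cover {d} {K : orderTopologicalType d} (a : K) (s : seq K) (z : K) :
  sorted (fun u v => (u < v)%O) (a :: s) -> (a <= z)%O -> (z <= last a s)%O ->
  z \in a :: s \/ exists k, (k < size s)%N /\
     (nth a (a :: s) k < z)%O /\ (z < nth a (a :: s) k.+1)%O.
Proof.
elim: s a => [|b s IH] a /= Hs Ha Hl.
  by left; rewrite inE eq_le Ha Hl.
case/andP: Hs => ab Hs.
have [->|za] := eqVneq z a; first by left; rewrite mem_head.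
have [zb|bz] := ltP z b.
  right; exists 0%N; split => //; split => //.
  by rewrite lt_neqAle Ha eq_sym za.
case: (IH b Hs bz Hl) => [zin|[k [kl [h1 h2]]]].
  by left; rewrite inE zin orbT.
right; exists k.+1; split => //=.
by rewrite !(set_nth_default b) //= ltnS ltnW.
Qed.

Lemma step_borel {d} {K : orderTopologicalType d} {R : realType} (S : K -> R) (x0 : K) :
  step_fun S -> forall A : set R, @measurable _ (KB x0) (S @^-1` A).
Proof.
move=> [a [s [Hs [Hmin [Hmax Hc]]]]] A.
have -> : S @^-1` A =
  (\bigcup_(k in [set k | (k < size (a :: s))%N]) ([set nth a (a :: s) k] `&` S @^-1` A)) `|`
  (\bigcup_(k in [set k | (k < size s)%N])
     ([set` `]nth a (a :: s) k, nth a (a :: s) k.+1[%O] `&` S @^-1` A)).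
  apply/seteqP; split => [z Az|z].
    case: (@sorted_cover _ _ a s z Hs (Hmin z) (Hmax z)) => [zin|[k [kl [h1 h2]]]].
      left; exists (index z (a :: s)); first by have : (index z (a :: s) < size (a :: s))%N by rewrite index_mem.
      by split => //=; rewrite nth_index.
    right; exists k => //; split => //=; by rewrite in_itv /= h1 h2.
  by case => -[k _ [_ ?]].
apply: measurableU.
  apply: bigcup_measurable => k _.
  have [Ap|Ap] := pselect (A (S (nth a (a :: s) k))).
    have -> : [set nth a (a :: s) k] `&` S @^-1` A = [set nth a (a :: s) k].
      by apply/seteqP; split => [z [] //|z /= ->].
    set p := nth a (a :: s) k.
    have -> : [set p] = ~` ([set` `]-oo, p[%O] `|` [set` `]p, +oo[%O]).
      apply/seteqP; split => [z /= -> |z /=].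
        by rewrite !in_itv /= ltxx; case.
      move/not_orP => [] /negP; rewrite in_itv /= -leNgt => h1 /negP.
      by rewrite in_itv /= andbT -leNgt => h2; apply/eqP; rewrite eq_le h1 h2.
    apply: measurableC; apply: measurableU; apply: sub_sigma_algebra.
      exact: lray_open.
    exact: rray_open.
  have -> : [set nth a (a :: s) k] `&` S @^-1` A = set0.
    by apply/seteqP; split => [z [/= -> //]|z].
  exact: measurable0.
apply: bigcup_measurable => k /= kl.
have [c Hck] := Hc k kl.
have [Ac|Ac] := pselect (A c).
  have -> : [set` `]nth a (a :: s) k, nth a (a :: s) k.+1[%O] `&` S @^-1` A
     = [set` `]nth a (a :: s) k, nth a (a :: s) k.+1[%O].
    apply/seteqP; split => [z [] //|z /= zi]; split => //.
    by move: zi; rewrite in_itv /= => /andP[h1 h2]; rewrite /preimage /= (Hck z h1 h2).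
  by apply: sub_sigma_algebra; exact: itv_open.
have -> : [set` `]nth a (a :: s) k, nth a (a :: s) k.+1[%O] `&` S @^-1` A = set0.
  apply/seteqP; split => [z [] /=|z //].
  by rewrite in_itv /= => /andP[h1 h2]; rewrite /preimage /= (Hck z h1 h2).
exact: measurable0.
Qed.

Section Approx.
Context {d : Order.disp_t} {K : orderTopologicalType d} {R : realType}.
Local Open Scope order_scope.

Lemma nbhs_left (x : K) (P : set K) : (exists y, y < x) -> nbhs x P ->
  exists a, a < x /\ forall y, a < y -> y <= x -> P y.
Proof.
move=> ex; rewrite itv_nbhsE => -[[l u] [oe xi] sub].
move: xi; rewrite itv_boundlr => /andP[lx xu].
have H y : l <= BLeft y -> y <= x -> P y.
  move=> ly yx; apply: sub; rewrite /= itv_boundlr ly /=.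
  by apply: le_trans xu; rewrite bnd_simp.
clear sub; case: l oe lx H => [b0 a0|b0] oe lx H.
  have b0f := itv_open_ends_lside oe; subst b0.
  exists a0; split; first by move: lx; rewrite bnd_simp.
  by move=> y ay yx; apply: H => //; rewrite bnd_simp.
have b0t := itv_open_ends_linfty oe; subst b0.
case: ex => y0 y0x; exists y0; split => // y _ yx; exact: H.
Qed.

Lemma nbhs_right (x : K) (P : set K) : (exists y, x < y) -> nbhs x P ->
  exists b, x < b /\ forall y, x <= y -> y < b -> P y.
Proof.
move=> ex; rewrite itv_nbhsE => -[[l u] [oe xi] sub].
move: xi; rewrite itv_boundlr => /andP[lx xu].
have H y : BRight y <= u -> x <= y -> P y.
  move=> yu xy; apply: sub; rewrite /= itv_boundlr yu andbT.
  by apply: le_trans lx _; rewrite bnd_simp.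
clear sub; case: u oe xu H => [b0 a0|b0] oe xu H.
  have b0f := itv_open_ends_rside oe; subst b0.
  exists a0; split; first by move: xu; rewrite bnd_simp.
  by move=> y xy ya; apply: H => //; rewrite bnd_simp.
have b0t := itv_open_ends_rinfty oe; subst b0.
case: ex => y0 xy0; exists y0; split => // y xy _; exact: H.
Qed.

Definition LBs (a : option K) (y : K) : Prop := if a is Some a' then a' < y else True.
Definition UBs (b : option K) (y : K) : Prop := if b is Some b' then y < b' else True.

Definition goodF (G : K -> R) (e : R) (x : K) (t : option K * option K * R) :=
  [/\ LBs t.1.1 x /\ UBs t.1.2 x,
      (t.1.1 = None -> forall y, ~ (y < x)) /\ (t.1.2 = None -> forall y, ~ (x < y)),
      (forall y, LBs t.1.1 y -> y < x -> `|G y - t.2| < e) &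
      (forall y, UBs t.1.2 y -> x < y -> `|G y - G x| < e)].

Lemma local (G : K -> R) (e : R) : regulated G -> (0 < e)%R ->
  forall x, exists t, goodF G e x t.
Proof.
move=> [rl rr] e0 x.
have [a [cL [Ha [Hn Hl]]]] : exists a cL, LBs a x /\ (a = None -> forall y, ~ (y < x)) /\
    (forall y, LBs a y -> y < x -> `|G y - cL| < e).
  have [ex|nex] := pselect (exists y, y < x); last first.
    exists None, 0%R; split => //; split; first by move=> _ y yx; apply: nex; exists y.
    by move=> y _ yx; exfalso; apply: nex; exists y.
  have [[p [px np]]|nip] := pselect (exists p, imm_pred p x).
    exists (Some p), 0%R; split => //; split => // y py yx.
    by exfalso; apply: np; exists y.
  have [l hl] := rl x (conj ex nip).
  move/cvgrPdist_lt: hl => /(_ e e0); rewrite near_withinE => hn.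
  have [a [ax Ha]] := @nbhs_left x _ ex hn.
  exists (Some a), l; split => //; split => // y ay yx.
  by rewrite distrC; apply: (Ha y ay (ltW yx)).
have [b [Hb [Hn' Hr]]] : exists b, UBs b x /\ (b = None -> forall y, ~ (x < y)) /\
    (forall y, UBs b y -> x < y -> `|G y - G x| < e).
  have [ex|nex] := pselect (exists y, x < y); last first.
    exists None; split => //; split; first by move=> _ y yx; apply: nex; exists y.
    by move=> y _ yx; exfalso; apply: nex; exists y.
  have [[p [px np]]|nip] := pselect (exists p, imm_pred x p).
    exists (Some p); split => //; split => // y py yx.
    by exfalso; apply: np; exists y.
  have hl := rr x (conj ex nip).
  move/cvgrPdist_lt: hl => /(_ e e0); rewrite near_withinE => hn.
  have [b [xb Hb]] := @nbhs_right x _ ex hn.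
  exists (Some b); split => //; split => // y yb xy.
  by rewrite distrC; apply: (Hb y (ltW xy) yb).
by exists (a, b, cL); split.
Qed.

End Approx.

Section Gap.
Context {d : Order.disp_t} {K : orderTopologicalType d} {R : realType}.
Local Open Scope order_scope.

Lemma le_nth (a : K) s i i' : sorted <%O (a :: s) -> (i <= i')%N ->
  (i' < size (a :: s))%N -> nth a (a :: s) i <= nth a (a :: s) i'.
Proof.
move=> Hs ii' i's.
have [->//|ne] := eqVneq i i'.
apply: ltW; apply: (sorted_ltn_nth lt_trans a Hs) => //.
  by rewrite inE /= (leq_ltn_trans ii').
by rewrite ltn_neqAle ne.
Qed.

Lemma nth_split (a : K) s k p : sorted <%O (a :: s) -> (k < size s)%N ->
  p \in a :: s -> p <= nth a (a :: s) k \/ nth a (a :: s) k.+1 <= p.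
Proof.
move=> Hs ks pin.
have jl : (index p (a :: s) < size (a :: s))%N by rewrite index_mem.
have pj : p = nth a (a :: s) (index p (a :: s)) by rewrite nth_index.
case: (leqP (index p (a :: s)) k) => jk.
  by left; rewrite [X in X <= _]pj; apply: le_nth => //=; rewrite ltnS ltnW.
by right; rewrite [X in _ <= X]pj; apply: le_nth.
Qed.

Lemma head_min (a : K) s p : sorted <%O (a :: s) -> p \in a :: s -> a <= p.
Proof.
move=> Hs; rewrite inE => /orP[/eqP->//|ps].
have := order_path_min lt_trans Hs => /allP /(_ p ps); exact: ltW.
Qed.

Lemma last_max (a : K) s p : sorted <%O (a :: s) -> p \in a :: s -> p <= last a s.
Proof.
elim: s a p => [|b s IH] a p /=; first by move=> _; rewrite inE => /eqP->.
move=> /andP[ab Hs]; rewrite inE => /orP[/eqP->|ps].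
  exact: le_trans (ltW ab) (IH b b Hs (mem_head _ _)).
exact: IH.
Qed.

Lemma gap_step (G : K -> R) (e : R) (a : K) (s : seq K) : (0 < e)%R ->
  sorted <%O (a :: s) -> (forall z, a <= z) -> (forall z, z <= last a s) ->
  (forall z, z \notin a :: s -> exists c : R, forall w, w \notin a :: s ->
      (forall p, p \in a :: s -> (p < z) = (p < w)) -> (`|G w - c| < e)%R) ->
  exists S : K -> R, step_fun S /\ forall x, (`|G x - S x| < e + e)%R.
Proof.
move=> e0 Hs Hmin Hmax Hgap.
pose gap z := [set w | w \notin a :: s /\ forall p, p \in a :: s -> (p < z) = (p < w)].
pose S z := if z \in a :: s then G z else G (xget a (gap z)).
exists S; split.
  exists a, s; split => //; split => //; split => // k ks.
  have inI x : nth a (a :: s) k < x -> x < nth a (a :: s) k.+1 ->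
      x \notin a :: s /\ forall p, p \in a :: s -> (p < x) = (p <= nth a (a :: s) k).
    move=> h1 h2; split.
      apply/negP => xin; case: (@nth_split a s k _ Hs ks xin) => h.
        by move: (lt_le_trans h1 h); rewrite ltxx.
      by move: (lt_le_trans h2 h); rewrite ltxx.
    move=> p pin; case: (@nth_split a s k _ Hs ks pin) => h.
      by rewrite h (le_lt_trans h h1).
    rewrite ltNge (ltW (lt_le_trans h2 h)) /=.
    apply/esym/negbTE; rewrite -ltNge.
    apply: lt_le_trans h; apply: lt_trans h1 h2.
  have [[x0 [h01 h02]]|nex] := pselect (exists x0,
      nth a (a :: s) k < x0 /\ x0 < nth a (a :: s) k.+1); last first.
    by exists 0%R => x h1 h2; exfalso; apply: nex; exists x.
  exists (S x0) => x h1 h2.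
  have [xn xr] := inI x h1 h2; have [x0n x0r] := inI x0 h01 h02.
  unfold S; rewrite (negbTE xn) (negbTE x0n).
  suff -> : gap x = gap x0 by [].
  apply/seteqP; split => w [wn wr]; split => // p pin.
    by rewrite -wr // xr // x0r.
  by rewrite -wr // xr // x0r.
move=> z; unfold S; case: ifPn => zin.
  by rewrite subrr normr0 addr_gt0.
have [c Hc] := Hgap z zin.
have gw : gap z (xget a (gap z)) by apply: xgetPex; exists z.
case: gw => wn wr.
have h1 := Hc z zin (fun p _ => erefl).
have h2 := Hc _ wn wr.
rewrite -[G z](subrK c) -addrA; apply: le_lt_trans (ler_normD _ _) _.
by rewrite ltrD // distrC.
Qed.

End Gap.

Lemma approx {d} {K : orderTopologicalType d} {R : realType} (G : K -> R) :
  compact_line K -> regulated G -> forall e : R, 0 < e ->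
  exists S : K -> R, step_fun S /\ forall x, `|G x - S x| < e.
Proof.
move=> [cK [u [v uv]]] rG e e0.
have e20 : 0 < e / 2 by rewrite divr_gt0.
have [F HF] := choice (@local d K R G (e / 2) rG e20).
pose f x := [set y | LBs (F x).1.1 y /\ UBs (F x).1.2 y].
have fo : forall x, open (f x).
  move=> x; have -> : f x = [set y | LBs (F x).1.1 y] `&` [set y | UBs (F x).1.2 y] by [].
  apply: openI.
    case: (F x).1.1 => [a'|] /=; last exact: openT.
    have -> : [set y | (a' < y)%O] = [set` `]a', +oo[%O].
      by apply/seteqP; split => y; rewrite /= in_itv /= andbT.
    exact: rray_open.
  case: (F x).1.2 => [b'|] /=; last exact: openT.
  have -> : [set y | (y < b')%O] = [set` `]-oo, b'[%O].
    by apply/seteqP; split => y; rewrite /= in_itv /=.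
  exact: lray_open.
have {}cK : cover_compact (T := KP u) [set: K] by have := @compact_cover (KP u); move=> <-.
have [D' _ HD'] := cK K setT (f : K -> set (KP u)) (fun i _ => fo i) (fun x _ => ex_intro2 _ _ x I
   (let: And4 (conj l r) _ _ _ := HF x in conj l r)).
pose xs : seq K := finmap.enum_fset D'.
pose L := xs ++ pmap (fun x => (F x).1.1) xs ++ pmap (fun x => (F x).1.2) xs.
pose P := sort <=%O (undup L).
have memP p : (p \in P) = (p \in L) by rewrite mem_sort mem_undup.
have sP : sorted <%O P by rewrite sort_lt_sorted undup_uniq.
have cov z : exists x, x \in xs /\ f x z.
  by case: (HD' z I) => x xD fz; exists x.
have xP x : x \in xs -> x \in P by move=> xin; rewrite memP mem_cat xin.
have aP x a' : x \in xs -> (F x).1.1 = Some a' -> a' \in P.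
  move=> xin E; rewrite memP !mem_cat mem_pmap; apply/orP; right; apply/orP; left.
  by apply/mapP; exists x.
have bP x b' : x \in xs -> (F x).1.2 = Some b' -> b' \in P.
  move=> xin E; rewrite memP !mem_cat (mem_pmap (fun x => (F x).1.2)).
  apply/orP; right; apply/orP; right.
  by apply/mapP; exists x.
have [a [s EP]] : exists a s, P = a :: s.
  case: (cov u) => x [xin _]; move: (xP x xin).
  by case: (P) => [//|a s] _; exists a, s.
rewrite EP in sP xP aP bP.
have [S [HS HSe]] : exists S : K -> R, step_fun S /\ forall x, `|G x - S x| < e / 2 + e / 2.
  apply: (@gap_step _ _ _ G (e / 2) a s e20 sP).
  - move=> z; rewrite leNgt; apply/negP => za.
    case: (cov z) => x [xin [lbz ubz]].
    have ax := head_min _ _ _ sP (xP x xin).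
    have zx := lt_le_trans za ax.
    case: (HF x) => _ [nl _] _ _.
    move: lbz nl; case E: (F x).1.1 => [a'|] /= lbz nl.
      have := head_min _ _ _ sP (aP x a' xin E) => aa.
      by move: (lt_le_trans za (le_trans aa (ltW lbz))); rewrite ltxx.
    exact: (nl erefl z zx).
  - move=> z; rewrite leNgt; apply/negP => za.
    case: (cov z) => x [xin [lbz ubz]].
    have ax := last_max _ _ _ sP (xP x xin).
    have zx := le_lt_trans ax za.
    case: (HF x) => _ [_ nr] _ _.
    move: ubz nr; case E: (F x).1.2 => [b'|] /= ubz nr.
      have := last_max _ _ _ sP (bP x b' xin E) => bb.
      by move: (le_lt_trans (le_trans (ltW ubz) bb) za); rewrite ltxx.
    exact: (nr erefl z zx).
  - move=> z zin.
    case: (cov z) => x [xin [lbz ubz]].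
    have xp := xP x xin.
    case: (HF x) => _ _ hl hr.
    case: (ltgtP z x) => [zlx|xlz|zeq]; last by move: zin; rewrite zeq xp.
      exists (F x).2 => w wn wr; apply: hl.
        move: lbz; case E: (F x).1.1 => [a'|] //= az.
        by rewrite -(wr a' (aP x a' xin E)).
      have := wr x xp; rewrite ltNge (ltW zlx) /= => /esym/negbT; rewrite -leNgt => wx.
      rewrite lt_neqAle wx andbT; apply/eqP => wxe.
      by move: wn; rewrite wxe xp.
    exists (G x) => w wn wr; apply: hr; last by rewrite -wr.
    move: ubz; case E: (F x).1.2 => [b'|] //= zb.
    have b'P := bP x b' xin E.
    have := wr b' b'P; rewrite ltNge (ltW zb) /= => /esym/negbT; rewrite -leNgt => wb.
    rewrite lt_neqAle wb andbT; apply/eqP => wbe.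
    by move: wn; rewrite wbe b'P.
exists S; split => // x; by rewrite [e in _ < e]splitr.
Qed.



Theorem lemma4p2 (d : Order.disp_t) (K : orderTopologicalType d) (R : realType)
  (G : K -> R) :
  compact_line K -> regulated G ->
  (exists S : nat -> K -> R,
     (forall n, step_fun (S n)) /\
     (forall e : R, 0 < e ->
        \forall n \near \oo, forall x : K, `|G x - S n x| < e)) /\
  borel_measurable G.
Proof.
move=> cK rG.
have [x0 _] : exists x0 : K, True by case: cK => _ [x [_ _]]; exists x.
have HS : forall n : nat, exists S : K -> R,
    step_fun S /\ forall x, `|G x - S x| < n.+1%:R^-1.
  by move=> n; apply: approx => //; rewrite invr_gt0 ltr0n.
have [S HS'] := choice HS.
have unif : forall e : R, 0 < e ->
    \forall n \near \oo, forall x : K, `|G x - S n x| < e.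
  move=> e e0; apply: filterS (near_infty_natSinv_lt (PosNum e0)) => n /= hn x.
  exact: lt_trans (proj2 (HS' n) x) hn.
split; first by exists S; split => // n; case: (HS' n).
move=> B mB.
have mG : measurable_fun (setT : set (KB x0)) (G : KB x0 -> R).
  refine (@measurable_realfun.measurable_fun_cvg _ (KB x0) R setT S G _ _).
    move=> m mT Y mY; rewrite setTI; apply: step_borel.
    by case: (HS' m).
  move=> x _; apply/cvgrPdist_lt => e e0.
  by apply: filterS (unif e e0) => n; apply.
by have := mG measurableT B mB; rewrite setTI.
Qed.
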